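(* Assume that $(X_j,Y_j)$, $j\in\mathbb{Z}$, is a memoryless process (i.e., $P_{X_1^N,Y_1^N}(x_1^N,y_1^N)=\prod_{j=1}^NP_{X,Y}(x_j,y_j)$), where $X_j\in\mathcal{U}$ with $|\mathcal{U}|=L$ and $Y_j\in\mathcal{Y}$ with $\mathcal{Y}$ finite. Then for every $n\ge1$, \[K_{n+1}\le\begin{cases}\frac{2(L-1)}{L}K_n^2 & \text{if } B_{n+1}=0,\\ \left(1+\frac L2\right)K_n & \text{if } B_{n+1}=1.\end{cases}\]
   Context: Identify $\mathcal{U}$ with $\{0,1,\dots,L-1\}$ with addition modulo $L$. For $U\in\mathcal{U}$ and finite-valued $Q$, the non-binary total variation distance is \[K^{(L)}(U|Q)=\sum_q\sum_{u'\ne u}\frac{P_Q(q)}{L-1}\cdot\frac{|P_{U|Q}(u|q)-P_{U|Q}(u'|q)|}{2},\] where the inner sum is over all ordered pairs $(u,u')\in\mathcal{U}^2$ with $u'\ne u$. Polarization setup: for $n\ge1$, $N=2^n$, $G_N=B_NG_2^{\otimes n}$ with $G_2=\begin{bmatrix}1&0\\1&1\end{bmatrix}$ and $B_N$ the bit-reversal permutation matrix; set $U_1^N=X_1^NG_N$ with arithmetic modulo $L$, and $Q_i=(U_1^{i-1},Y_1^N)$. Let $B_1,B_2,\dots$ be i.i.d. Bernoulli$(1/2)$ and $i-1=\sum_{j=1}^nB_j2^{n-j}$. The total variation process is $K_n=K^{(L)}(U_i|Q_i)$; $K_{n+1}$ is defined in the same way with $n+1$ in place of $n$ and the same $B_j$'s.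 *)

(* Defs.v *)
From HB Require Import structures.
From mathcomp Require Import all_boot all_order all_algebra.
From mathcomp Require Import zify.
Set Implicit Arguments. Unset Strict Implicit. Unset Printing Implicit Defensive.
Import Order.TTheory GRing.Theory Num.Theory.
Local Open Scope ring_scope.

Definition bit (k m : nat) : bool := odd (m %/ 2 ^ k).

Definition bitrev (n a : nat) : nat := (\sum_(k < n) bit k a * 2 ^ (n.-1 - k))%N.

(* index i-1 = sum_{j=1}^n B_j 2^{n-j}  (0-based channel index) *)
Definition idx (n : nat) (b : nat -> bool) : nat :=
  (\sum_(1 <= j < n.+1) b j * 2 ^ (n - j))%N.

Lemma idxS n b : idx n.+1 b = ((idx n b).*2 + b n.+1)%N.
Proof.
rewrite /idx big_nat_recr //= subnn expn0 muln1 -mul2n big_distrr /=.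
congr (_ + _)%N; apply: eq_big_nat => j /andP[_ hj].
by rewrite subSn // expnS mulnCA.
Qed.

Lemma idx_lt n b : (idx n b < 2 ^ n)%N.
Proof.
elim: n => [|n IH]; first by rewrite /idx big_geq.
rewrite idxS expnS mul2n -!muln2; case: (b n.+1) => /=; lia.
Qed.

Definition G2 (L : nat) : 'M['Z_L]_2 :=
  \matrix_(r < 2, c < 2) (if (r == 0 :> nat) && (c == 1 :> nat) then 0 else 1).

(* n-fold Kronecker power of G_2: entry (a,b) = prod_k G_2(a_k, b_k),
   where a_k, b_k are the binary digits of a, b *)
Definition G2pow (L n : nat) : 'M['Z_L]_(2 ^ n) :=
  \matrix_(a, c) \prod_(k < n) G2 L (inord (bit k a)) (inord (bit k c)).

Definition BN (L n : nat) : 'M['Z_L]_(2 ^ n) :=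
  \matrix_(a, c) ((c == bitrev n a :> nat)%:R).

Definition GN (L n : nat) : 'M['Z_L]_(2 ^ n) := BN L n *m G2pow L n.

Definition Uvec (L n : nat) (x : 'rV['Z_L]_(2 ^ n)) : 'rV['Z_L]_(2 ^ n) :=
  x *m GN L n.

(* p u q = P_{U,Q}(u,q) (joint pmf on finite U x Q) *)
Definition KL (R : realFieldType) (L : nat) (U Q : finType) (p : U -> Q -> R) : R :=
  let PQ q := \sum_(u : U) p u q in
  let PUQ u q := p u q / PQ q in
  \sum_(q : Q) \sum_(u : U) \sum_(u' : U | u' != u)
     PQ q / (L%:R - 1) * (`|PUQ u q - PUQ u' q| / 2).

(* Joint pmf of (U_i, Q_i) with Q_i = (U_1^{i-1}, Y_1^N), for the memoryless
   source with single-letter pmf P (0-based index i : U_1^{i-1} is indexed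
   by 'I_i). *)
Definition pUQ (R : realFieldType) (L : nat) (Y : finType) (P : 'Z_L -> Y -> R)
    (n : nat) (i : 'I_(2 ^ n)) (u : 'Z_L)
    (q : {ffun 'I_i -> 'Z_L} * {ffun 'I_(2 ^ n) -> Y}) : R :=
  \sum_(x : 'rV['Z_L]_(2 ^ n))
    (\prod_(j < 2 ^ n) P (x 0 j) (q.2 j)) *
    ((Uvec x 0 i == u) &&
     [forall k : 'I_i, Uvec x 0 (widen_ord (ltnW (ltn_ord i)) k) == q.1 k])%:R.

Definition Kproc (R : realFieldType) (L : nat) (Y : finType) (P : 'Z_L -> Y -> R)
    (n : nat) (b : nat -> bool) : R :=
  KL L (@pUQ R L Y P n (Ordinal (idx_lt n b))).

(* Main.v *)
Require Import Defs.
From HB Require Import structures.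
From mathcomp Require Import all_boot all_order all_algebra.
From mathcomp Require Import zify ring lra.
Set Implicit Arguments. Unset Strict Implicit. Unset Printing Implicit Defensive.
Import Order.TTheory GRing.Theory Num.Theory.
Local Open Scope ring_scope.

Lemma bit0_2 m (t : bool) : bit 0 (2 * m + t) = t.
Proof. by rewrite /bit expn0 divn1 oddD oddM /=; case: t. Qed.

Lemma bitS_2 k m (t : bool) : bit k.+1 (2 * m + t) = bit k m.
Proof.
rewrite /bit expnS divnMA; congr (odd (_ %/ _)).
by rewrite mulnC divnMDl // divn_small ?addn0 //; case: t.
Qed.

Lemma bit_addhi k n c : (k < n)%N -> bit k (c + 2 ^ n) = bit k c.
Proof.
move=> hk; rewrite /bit addnC divnDl; last by rewrite dvdn_exp2l // ltnW.
rewrite oddD -(subnKC (ltnW hk)) expnD mulKn ?expn_gt0 //.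
by rewrite oddX /= -(subnSK hk) /=.
Qed.

Lemma bit_lo n c : (c < 2 ^ n)%N -> bit n c = false.
Proof. by move=> h; rewrite /bit divn_small. Qed.

Lemma bit_hi n c : (c < 2 ^ n)%N -> bit n (c + 2 ^ n) = true.
Proof.
move=> h; rewrite /bit -{1}(mul1n (2 ^ n)%N) addnC divnMDl ?expn_gt0 //.
by rewrite divn_small.
Qed.

Lemma bitrevS n c : bitrev n.+1 c = (2 * bitrev n c + bit n c)%N.
Proof.
rewrite /bitrev big_ord_recr /= subnn expn0 muln1; congr (_ + _)%N.
rewrite big_distrr /=; apply: eq_bigr => k _.
rewrite mulnCA -expnS; congr (_ * 2 ^ _)%N; have := ltn_ord k; lia.
Qed.

Lemma bitrev_addhi n c : bitrev n (c + 2 ^ n) = bitrev n c.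
Proof. by rewrite /bitrev; apply: eq_bigr => k _; rewrite bit_addhi. Qed.

Lemma bitrev_lt n c : (bitrev n c < 2 ^ n)%N.
Proof.
elim: n => [|n IH]; first by rewrite /bitrev big_ord0.
rewrite bitrevS expnS; case: (bit n c) => /=; lia.
Qed.

Section U.
Variable L : nat.

Definition hh (e a : bool) : 'Z_L := if ~~ e && a then 0 else 1.
Definition gn n (e a : nat) : 'Z_L := \prod_(k < n) hh (bit k e) (bit k a).
Definition Ug n (x : 'rV['Z_L]_(2 ^ n)) (j : nat) : 'Z_L :=
  \sum_(c < 2 ^ n) x 0 c * gn n (bitrev n c) j.

Lemma G2E (e a : bool) : G2 L (inord e) (inord a) = hh e a.
Proof.
rewrite /G2 mxE /hh !inordK; last 2 first.
- by case: a. - by case: e.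
by case: e; case: a.
Qed.

Lemma Uvec_Ug n x (k : 'I_(2 ^ n)) : Uvec x 0 k = Ug x k.
Proof.
rewrite /Uvec /Ug mxE; apply: eq_bigr => c _; congr (_ * _).
rewrite /GN mxE (bigD1 (Ordinal (bitrev_lt n c))) //= big1 ?addr0.
  rewrite /BN /G2pow !mxE eqxx mul1r /gn; apply: eq_bigr => i _.
  by rewrite G2E.
move=> d hd; rewrite /BN mxE.
have -> : (d == bitrev n c :> nat) = false.
  by apply/negbTE; apply: contra hd => /eqP h; apply/eqP/val_inj.
by rewrite mul0r.
Qed.

Lemma lo_proof n (c : 'I_(2 ^ n)) : (c < 2 ^ n.+1)%N.
Proof. have := ltn_ord c; rewrite expnS; lia. Qed.
Lemma hi_proof n (c : 'I_(2 ^ n)) : (c + 2 ^ n < 2 ^ n.+1)%N.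
Proof. have := ltn_ord c; rewrite expnS; lia. Qed.
Definition lo_ord n (c : 'I_(2 ^ n)) : 'I_(2 ^ n.+1) := Ordinal (lo_proof c).
Definition hi_ord n (c : 'I_(2 ^ n)) : 'I_(2 ^ n.+1) := Ordinal (hi_proof c).

End U.

Lemma big_lohi (R : Type) (idx : R) (op : Monoid.com_law idx) n
   (F : 'I_(2 ^ n.+1) -> R) :
  \big[op/idx]_(c < 2 ^ n.+1) F c =
  op (\big[op/idx]_(c < 2 ^ n) F (lo_ord c)) (\big[op/idx]_(c < 2 ^ n) F (hi_ord c)).
Proof.
pose oF (c : nat) := oapp F idx (insub c).
have E : forall m (G : 'I_m -> R), \big[op/idx]_(c < m) G c = 
   \big[op/idx]_(0 <= c < m) oapp G idx (insub c).
  by move=> m G; rewrite big_mkord; apply: eq_bigr => c _; rewrite valK.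
rewrite E (big_cat_nat _ (n := 2 ^ n)) //=; last by rewrite expnS; lia.
rewrite -{2}(add0n (2 ^ n)%N) big_addn.
have -> : (2 ^ n.+1 - 2 ^ n = 2 ^ n)%N by rewrite expnS; lia.
rewrite !big_mkord; congr (op _ _); apply: eq_bigr => c _.
  case: insubP => [k _ hk|/negP []]; last by apply: lo_proof.
  by congr F; apply: val_inj.
case: insubP => [k _ hk|/negP []]; last by apply: hi_proof.
by congr F; apply: val_inj.
Qed.

Definition lo L n (x : 'rV['Z_L]_(2 ^ n.+1)) : 'rV['Z_L]_(2 ^ n) := \row_c x 0 (lo_ord c).
Definition hi L n (x : 'rV['Z_L]_(2 ^ n.+1)) : 'rV['Z_L]_(2 ^ n) := \row_c x 0 (hi_ord c).

Lemma gnS L n e (t : bool) j (b : bool) :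
  gn L n.+1 (2 * e + t) (2 * j + b) = hh L t b * gn L n e j.
Proof.
rewrite /gn big_ord_recl /= !bit0_2; congr (_ * _).
by apply: eq_bigr => k _; rewrite /bump /= !add1n !bitS_2.
Qed.

Lemma Ug_step L n (x : 'rV['Z_L]_(2 ^ n.+1)) j (b : bool) :
  Ug x (2 * j + b) = (if b then 0 else Ug (lo x) j) + Ug (hi x) j.
Proof.
rewrite /Ug big_lohi /=; congr (_ + _).
  have E : forall c : 'I_(2 ^ n), gn L n.+1 (bitrev n.+1 c) (2 * j + b)
      = hh L false b * gn L n (bitrev n c) j.
    by move=> c; rewrite bitrevS bit_lo // gnS.
  case: b E => E.
    by rewrite big1 // => c _; rewrite E /hh /= mul0r mulr0.
  by apply: eq_bigr => c _; rewrite E mxE /hh /= mul1r.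
apply: eq_bigr => c _; rewrite mxE bitrevS bit_hi // bitrev_addhi gnS /hh /=.
by rewrite mul1r.
Qed.


Section Analytic.
Variable R : realFieldType.
Variable L : nat.
Local Notation Z := 'Z_L.

Definition Dv (a : Z -> R) : R := \sum_u \sum_u' `|a u - a u'|.

Lemma Dv_ge0 a : 0 <= Dv a.
Proof. by apply: sumr_ge0 => u _; apply: sumr_ge0 => u' _. Qed.

Lemma KL_Dv (Q : finType) (p : Z -> Q -> R) : (forall u q, 0 <= p u q) ->
  KL L p = (2 * (L%:R - 1))^-1 * \sum_q Dv (p^~ q).
Proof.
move=> p0; rewrite /KL mulr_sumr; apply: eq_bigr => q _.
rewrite /Dv mulr_sumr; apply: eq_bigr => u _.
rewrite [RHS]mulr_sumr [RHS](bigD1 u) //= subrr normr0 mulr0 add0r.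
apply: eq_bigr => u' _.
set S := \sum_u0 p u0 q.
have [S0|Sn0] := eqVneq S 0.
  have z : forall v, p v q = 0.
    by move=> v; apply: (psumr_eq0P (fun i _ => p0 i q) S0).
  by rewrite S0 !z !(subrr, mul0r, mulr0, normr0).
have Sp : 0 < S by rewrite lt0r Sn0 sumr_ge0.
have Si : 0 <= S^-1 by rewrite invr_ge0 ltW.
rewrite -mulrBl normrM (ger0_norm Si).
rewrite (_ : _ / _ * _ = (S * S^-1) * ((2 * (L%:R - 1))^-1 * `|p u q - p u' q|)).
  by rewrite mulfV // mul1r.
rewrite invfM; ring.
Qed.

Lemma sum_sub (F : Z -> R) (w : Z) : \sum_v F (w - v) = \sum_v F v.
Proof. by rewrite [RHS](reindex_inj (subrI w)). Qed.

Lemma sum_subr (F : Z -> R) (w : Z) : \sum_v F (v - w) = \sum_v F v.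
Proof. by rewrite [RHS](reindex_inj (addIr (- w))). Qed.

Definition conv (a b : Z -> R) (u : Z) := \sum_v a v * b (u - v).

Lemma conv_bound1 a b c : Dv (conv a b) <= (\sum_v `|a v - c|) * Dv b.
Proof.
rewrite /Dv.
have E : forall u u', conv a b u - conv a b u' =
    \sum_v (a v - c) * (b (u - v) - b (u' - v)).
  move=> u u'; rewrite /conv.
  have H0 : \sum_v (b (u - v) - b (u' - v)) = 0 by rewrite sumrB !sum_sub subrr.
  transitivity (\sum_v (a v * (b (u - v) - b (u' - v)) - c * (b (u - v) - b (u' - v)))).
    rewrite sumrB -mulr_sumr H0 mulr0 subr0 -sumrB.
    by apply: eq_bigr => v _; rewrite mulrBr.
  by apply: eq_bigr => v _; rewrite mulrBl.
apply: (@le_trans _ _ (\sum_u \sum_u' \sum_v `|a v - c| * `|b (u - v) - b (u' - v)|)).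
  apply: ler_sum => u _; apply: ler_sum => u' _; rewrite E.
  by apply: (le_trans (ler_norm_sum _ _ _)); apply: ler_sum => v _; rewrite normrM.
rewrite le_eqVlt; apply/orP; left; apply/eqP; rewrite mulr_suml.
under eq_bigr do rewrite exchange_big /=.
rewrite exchange_big /=; apply: eq_bigr => v _.
rewrite mulr_sumr -(sum_subr (fun u => `|a v - c| * \sum_u' `|b u - b u'|) v).
apply: eq_bigr => u _.
by rewrite mulr_sumr -(sum_subr (fun u' => `|a v - c| * `|b (u - v) - b u'|) v).
Qed.

Lemma card_Z : (1 < L)%N -> #|{: Z}| = L.
Proof. by move=> hL; rewrite card_ord; case: L hL => [|[|l]]. Qed.

Lemma conv_bound a b : (1 < L)%N -> L%:R * Dv (conv a b) <= Dv a * Dv b.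
Proof.
move=> hL.
have -> : L%:R * Dv (conv a b) = \sum_(w : Z) Dv (conv a b).
  by rewrite sumr_const card_Z // mulr_natl.
rewrite /Dv [X in _ <= X * _]exchange_big mulr_suml.
by apply: ler_sum => w _; apply: conv_bound1.
Qed.



Lemma plus_bound a b : (forall u, 0 <= a u) -> (forall u, 0 <= b u) ->
  \sum_s Dv (fun w => a (s - w) * b w) <= (\sum_u a u) * Dv b + (\sum_u b u) * Dv a.
Proof.
move=> a0 b0; rewrite /Dv.
apply: (@le_trans _ _ (\sum_s \sum_w \sum_w'
   (a (s - w) * `|b w - b w'| + b w' * `|a (s - w) - a (s - w')|))).
  apply: ler_sum => s _; apply: ler_sum => w _; apply: ler_sum => w' _.
  have -> : a (s - w) * b w - a (s - w') * b w' =
     a (s - w) * (b w - b w') + b w' * (a (s - w) - a (s - w')) by ring.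
  apply: (le_trans (ler_normD _ _)).
  by rewrite !normrM (ger0_norm (a0 _)) (ger0_norm (b0 _)).
rewrite le_eqVlt; apply/orP; left; apply/eqP.
under eq_bigr => s _.
  under eq_bigr => w _ do rewrite big_split /=.
  rewrite big_split /=.
  over.
rewrite big_split /=; congr (_ + _).
  rewrite [LHS]exchange_big [RHS]mulr_sumr /=; apply: eq_bigr => w _.
  rewrite [LHS]exchange_big [RHS]mulr_sumr /=; apply: eq_bigr => w' _.
  by rewrite -mulr_suml (sum_subr (fun t => a t) w).
under eq_bigr => s' _ do rewrite exchange_big /=.
rewrite [LHS]exchange_big [RHS]mulr_suml /=; apply: eq_bigr => w' _.
under eq_bigr => s' _ do rewrite -mulr_sumr.
rewrite -mulr_sumr; congr (_ * _).
rewrite (eq_bigr (fun s' => \sum_t `|a t - a (s' - w')|)); last first.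
  by move=> s' _; exact: (sum_sub (fun t => `|a t - a (s' - w')|) s').
rewrite exchange_big /=; apply: eq_bigr => t _.
exact: (sum_subr (fun s' => `|a t - a s'|) w').
Qed.

Lemma inj_sum (Q Q' : finType) (phi : Q -> Q') (G : Q' -> R) :
  injective phi -> (forall q, 0 <= G q) -> \sum_q G (phi q) <= \sum_q G q.
Proof.
move=> inj G0.
have -> : \sum_q G (phi q) = \sum_(q in [set phi x | x in predT]) G q.
  by rewrite big_imset //=; move=> x y _ _; apply: inj.
rewrite [X in _ <= X](bigID (mem [set phi x | x in predT])) /=.
by rewrite lerDl sumr_ge0.
Qed.
End Analytic.


Section Pref.
Variable L : nat.
Local Notation Z := 'Z_L.

Definition qn (m : nat) (g : {ffun 'I_m -> Z}) (j : nat) : Z := oapp g 0 (insub j).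

Lemma qnE m (g : {ffun 'I_m -> Z}) (k : 'I_m) : qn g k = g k.
Proof. by rewrite /qn valK. Qed.

Lemma qn_ffun m (F : nat -> Z) j : (j < m)%N -> qn [ffun k : 'I_m => F k] j = F j.
Proof. by move=> hj; rewrite /qn insubT /= ffunE. Qed.

Definition pref (f : nat -> Z) (m : nat) (g : {ffun 'I_m -> Z}) :=
  [forall k : 'I_m, f k == g k].

Lemma prefP f m g : reflect (forall j, (j < m)%N -> f j = qn g j) (@pref f m g).
Proof.
apply: (iffP forallP) => H.
  move=> j hj; have /eqP := H (Ordinal hj); by rewrite -(qnE g).
by move=> k; rewrite -(qnE g) -H.
Qed.

Definition r1 (A I : nat) (g : {ffun 'I_A -> Z}) : {ffun 'I_I -> Z} :=
  [ffun k : 'I_I => qn g (2 * k) - qn g (2 * k + 1)].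
Definition r2 (A I : nat) (g : {ffun 'I_A -> Z}) : {ffun 'I_I -> Z} :=
  [ffun k : 'I_I => qn g (2 * k + 1)].

Lemma pref_split (U V W : nat -> Z)
  (hU : forall j (c : bool), U (2 * j + c)%N = (if c then 0 else V j) + W j)
  (A I : nat) (b : bool) (g : {ffun 'I_A -> Z}) : A = (2 * I + b)%N ->
  pref U g = [&& pref V (r1 I g), pref W (r2 I g) &
                 (b ==> (V I + W I == qn g (2 * I)))].
Proof.
move=> hA; apply/idP/idP.
  move/prefP => H; apply/and3P; split.
  - apply/prefP => k hk; rewrite /r1 (qn_ffun (fun k => qn g (2 * k) - qn g (2 * k + 1))) //.
    have h0 := H (2 * k)%N ltac:(lia); have h1 := H (2 * k + 1)%N ltac:(lia).
    move: (hU k false) (hU k true) => /=; rewrite addn0 => e0 e1.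
    by rewrite -h0 -h1 e0 e1 add0r addrK.
  - apply/prefP => k hk; rewrite /r2 (qn_ffun (fun k => qn g (2 * k + 1))) //.
    by rewrite -(H (2 * k + 1)%N ltac:(lia)) (hU k true) add0r.
  - apply/implyP => hb; apply/eqP.
    have := H (2 * I)%N ltac:(case: b hb hA => //; lia).
    by move: (hU I false) => /=; rewrite addn0 => ->.
case/and3P => /prefP H1 /prefP H2 /implyP H3; apply/prefP => j hj.
have hj2 : j = (2 * j./2 + odd j)%N by rewrite mul2n addnC odd_double_half.
rewrite hj2 hU.
have [hk|hk] := ltnP j./2 I.
  case: (odd j) hj2 => hj2 /=.
    by rewrite add0r H2 // /r2 (qn_ffun (fun k => qn g (2 * k + 1))).
  by rewrite H1 // H2 // /r1 /r2 (qn_ffun (fun k => qn g (2 * k + 1))) // (qn_ffun (fun k => qn g (2 * k) - qn g (2 * k + 1))) // addn0 subrK.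
have e : j = (2 * I)%N /\ b = true.
  clear H3; move: hA hk hj hj2; case: b; case: (odd j); lia.
case: e => hj3 hb.
have -> : odd j = false by rewrite hj3 oddM.
have -> : j./2 = I by rewrite hj3; lia.
by rewrite /= addn0; apply/eqP/H3.
Qed.

End Pref.


Section Split.
Variable L : nat.
Local Notation Z := 'Z_L.
Variable n : nat.

Definition join (x1 x2 : 'rV[Z]_(2 ^ n)) : 'rV[Z]_(2 ^ n.+1) :=
  \row_c (if @insub _ (fun j => j < 2 ^ n)%N 'I_(2 ^ n) (val c) is Some k then x1 0 k
          else if @insub _ (fun j => j < 2 ^ n)%N 'I_(2 ^ n) (val c - 2 ^ n)%N is Some k
               then x2 0 k else 0).

Lemma lo_join x1 x2 : lo (join x1 x2) = x1.
Proof.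
apply/rowP => c; rewrite !mxE /=.
by rewrite valK.
Qed.

Lemma hi_join x1 x2 : hi (join x1 x2) = x2.
Proof.
apply/rowP => c; rewrite !mxE /=.
rewrite insubF; last by apply/negbTE; rewrite -leqNgt leq_addl.
by rewrite addnK valK.
Qed.

Lemma join_lohi x : join (lo x) (hi x) = x.
Proof.
apply/rowP => c; rewrite !mxE /=.
case: insubP => [k _ hk|hc].
  by rewrite mxE; congr (x 0 _); apply: val_inj.
case: insubP => [k _ hk|/negP []].
  by rewrite mxE; congr (x 0 _); apply: val_inj; rewrite /= hk subnK // leqNgt.
have := ltn_ord c; rewrite [X in (_ < X)%N -> _]expnS; move: hc; rewrite -leqNgt; lia.
Qed.

Lemma sum_split (R : nzRingType) (F : 'rV[Z]_(2 ^ n.+1) -> R) :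
  \sum_x F x = \sum_x1 \sum_x2 F (join x1 x2).
Proof.
rewrite pair_big /=.
rewrite (reindex (fun p : 'rV[Z]_(2 ^ n) * 'rV[Z]_(2 ^ n) => join p.1 p.2)) //=.
exists (fun x => (lo x, hi x)) => [[x1 x2] _|x _] /=.
  by rewrite lo_join hi_join.
by rewrite join_lohi.
Qed.

Lemma Ug_join x1 x2 j (c : bool) :
  Ug (join x1 x2) (2 * j + c) = (if c then 0 else Ug x1 j) + Ug x2 j.
Proof. by rewrite Ug_step lo_join hi_join. Qed.

End Split.

Lemma boolR_and (R : nzRingType) (a b : bool) : ((a && b)%:R : R) = a%:R * b%:R.
Proof. by case: a; case: b; rewrite ?mul1r ?mul0r. Qed.

Section Decomp.
Variable R : realFieldType.
Variable L : nat.
Local Notation Z := 'Z_L.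
Variable Y : finType.
Variable P : Z -> Y -> R.

Definition omega n (x : 'rV[Z]_(2 ^ n)) (y : {ffun 'I_(2 ^ n) -> Y}) : R :=
  \prod_(j < 2 ^ n) P (x 0 j) (y j).

Lemma pUQE n (i : 'I_(2 ^ n)) u q :
  @pUQ R L Y P n i u q = \sum_x omega x q.2 * ((Ug x i == u) && pref (Ug x) q.1)%:R.
Proof.
apply: eq_bigr => x _; rewrite Uvec_Ug /pref; congr (_ * ((_ && _)%:R)).
by apply: eq_forallb => k; rewrite Uvec_Ug.
Qed.

Definition ylo n (y : {ffun 'I_(2 ^ n.+1) -> Y}) : {ffun 'I_(2 ^ n) -> Y} :=
  [ffun j => y (lo_ord j)].
Definition yhi n (y : {ffun 'I_(2 ^ n.+1) -> Y}) : {ffun 'I_(2 ^ n) -> Y} :=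
  [ffun j => y (hi_ord j)].

Lemma omega_join n (x1 x2 : 'rV[Z]_(2 ^ n)) y :
  omega (join x1 x2) y = omega x1 (ylo y) * omega x2 (yhi y).
Proof.
rewrite /omega big_lohi /=; congr (_ * _); apply: eq_bigr => c _; rewrite ffunE.
  by have /rowP/(_ c) := lo_join x1 x2; rewrite mxE => ->.
by have /rowP/(_ c) := hi_join x1 x2; rewrite mxE => ->.
Qed.


Lemma sum_pick (H : Z -> R) (a : Z) : \sum_v ((a == v)%:R * H v) = H a.
Proof.
rewrite (bigD1 a) //= eqxx mul1r big1 ?addr0 // => v hv.
by rewrite eq_sym (negbTE hv) mul0r.
Qed.

Lemma eq_addsub (a1 a2 u : Z) : (a1 + a2 == u) = (a2 == u - a1).
Proof. by rewrite [RHS]eq_sym subr_eq addrC eq_sym. Qed.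

Lemma eq_subsub (s a u : Z) : (s - a == u) = (a == s - u).
Proof. by rewrite subr_eq [RHS]eq_sym subr_eq addrC. Qed.

Lemma decomp0 n (A : 'I_(2 ^ n.+1)) (I : 'I_(2 ^ n)) (hA : val A = (2 * I)%N) u q :
  @pUQ R L Y P n.+1 A u q = \sum_v @pUQ R L Y P n I v (r1 I q.1, ylo q.2) *
                                   @pUQ R L Y P n I (u - v) (r2 I q.1, yhi q.2).
Proof.
rewrite pUQE sum_split.
under [RHS]eq_bigr => v _ do rewrite !pUQE big_distrlr /=.
rewrite [RHS]exchange_big /=; apply: eq_bigr => x1 _.
rewrite [RHS]exchange_big /=; apply: eq_bigr => x2 _.
have hA' : val A = (2 * I + false)%N by rewrite hA addn0.
rewrite omega_join (pref_split (Ug_join x1 x2) q.1 hA') /=.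
have -> : Ug (join x1 x2) A = Ug x1 I + Ug x2 I.
  by rewrite hA' Ug_join.
rewrite andbT.
transitivity (\sum_v ((Ug x1 I == v)%:R * (omega x1 (ylo q.2) * omega x2 (yhi q.2) *
    (pref (Ug x1) (r1 I q.1))%:R * (pref (Ug x2) (r2 I q.1))%:R * (Ug x2 I == u - v)%:R))).
  by rewrite sum_pick eq_addsub !boolR_and /=; ring.
by apply: eq_bigr => v _; rewrite !boolR_and /=; ring.
Qed.

Lemma decomp1 n (A : 'I_(2 ^ n.+1)) (I : 'I_(2 ^ n)) (hA : val A = (2 * I + 1)%N) u q :
  @pUQ R L Y P n.+1 A u q = @pUQ R L Y P n I (qn q.1 (2 * I) - u) (r1 I q.1, ylo q.2) *
                             @pUQ R L Y P n I u (r2 I q.1, yhi q.2).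
Proof.
rewrite pUQE sum_split !pUQE big_distrlr /=; apply: eq_bigr => x1 _.
apply: eq_bigr => x2 _.
have hA' : val A = (2 * I + true)%N by rewrite hA.
rewrite omega_join (pref_split (Ug_join x1 x2) q.1 hA') /=.
have -> : Ug (join x1 x2) A = Ug x2 I by rewrite hA' Ug_join /= add0r.
have -> : (Ug x2 I == u) && [&& pref (Ug x1) (r1 I q.1), pref (Ug x2) (r2 I q.1)
      & Ug x1 I + Ug x2 I == qn q.1 (2 * I)] =
   ((Ug x1 I == qn q.1 (2 * I) - u) && pref (Ug x1) (r1 I q.1)) &&
   ((Ug x2 I == u) && pref (Ug x2) (r2 I q.1)).
  case: (Ug x2 I =P u) => [->|]; last by rewrite andbF.
  by rewrite /= [Ug x1 I + _]addrC eq_addsub; case: (_ == _); case: pref; case: pref.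
by rewrite !boolR_and; ring.
Qed.

End Decomp.


Section Inj.
Variable L : nat.
Local Notation Z := 'Z_L.

Lemma r_inj (A I : nat) (b : bool) (g g' : {ffun 'I_A -> Z}) : A = (2 * I + b)%N ->
  r1 I g = r1 I g' -> r2 I g = r2 I g' -> (b -> qn g (2 * I) = qn g' (2 * I)) ->
  g = g'.
Proof.
move=> hA E1 E2 E3.
have h2 : forall k, (k < I)%N -> qn g (2 * k + 1) = qn g' (2 * k + 1).
  move=> k hk; have := congr1 (fun f : {ffun 'I_I -> Z} => f (Ordinal hk)) E2.
  by rewrite !ffunE.
have h1 : forall k, (k < I)%N -> qn g (2 * k) = qn g' (2 * k).
  move=> k hk; have := congr1 (fun f : {ffun 'I_I -> Z} => f (Ordinal hk)) E1.
  by rewrite !ffunE /= h2 // => /addIr.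
apply/ffunP => j; rewrite -!qnE.
have hj2 : nat_of_ord j = (2 * j./2 + odd j)%N by rewrite mul2n addnC odd_double_half.
rewrite hj2.
have [hk|hk] := ltnP j./2 I.
  by case: (odd j) => /=; rewrite ?addn0 ?h1 ?h2.
have e : nat_of_ord j = (2 * I)%N /\ b = true.
  have := ltn_ord j; move: hA hk hj2; case: b E3 => _; case: (odd j); lia.
case: e => hj3 hb.
have -> : odd j = false by rewrite hj3 oddM.
have -> : j./2 = I by rewrite hj3; lia.
by rewrite addn0 E3.
Qed.

Lemma lohi_cases n (c : 'I_(2 ^ n.+1)) :
  (exists k, c = lo_ord k) \/ (exists k, c = hi_ord k).
Proof.
have [h|h] := ltnP c (2 ^ n).
  by left; exists (Ordinal h); apply: val_inj.
right; have h' : (c - 2 ^ n < 2 ^ n)%N.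
  by have := ltn_ord c; rewrite [X in (_ < X)%N -> _]expnS; lia.
by exists (Ordinal h'); apply: val_inj => /=; rewrite subnK.
Qed.

End Inj.

Lemma y_inj (Y : finType) n (y y' : {ffun 'I_(2 ^ n.+1) -> Y}) :
  ylo y = ylo y' -> yhi y = yhi y' -> y = y'.
Proof.
move=> E1 E2; apply/ffunP => c.
case: (lohi_cases c) => [[k ->]|[k ->]].
  by have := congr1 (fun f : {ffun 'I_(2 ^ n) -> Y} => f k) E1; rewrite !ffunE.
by have := congr1 (fun f : {ffun 'I_(2 ^ n) -> Y} => f k) E2; rewrite !ffunE.
Qed.

Section Mass.
Variable R : realFieldType.
Variable L : nat.
Local Notation Z := 'Z_L.
Variable Y : finType.
Variable P : Z -> Y -> R.
Hypothesis hP : \sum_u \sum_y P u y = 1.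

Lemma pref_eq (f : nat -> Z) m (g : {ffun 'I_m -> Z}) :
  pref f g = (g == [ffun k : 'I_m => f k]).
Proof.
apply/forallP/eqP => [H|->] .
  by apply/ffunP => k; rewrite ffunE; apply/esym/eqP.
by move=> k; rewrite ffunE.
Qed.

Lemma sum_eq1 (T : finType) (a : T) : \sum_v ((a == v)%:R : R) = 1.
Proof.
rewrite (bigD1 a) //= eqxx big1 ?addr0 // => v hv.
by rewrite eq_sym (negbTE hv).
Qed.

Lemma omega_mass n : \sum_(y : {ffun 'I_(2 ^ n) -> Y}) \sum_(x : 'rV[Z]_(2 ^ n)) omega P x y = 1.
Proof.
rewrite exchange_big /=.
under eq_bigr => x _ do rewrite /omega -(bigA_distr_bigA (fun j v => P (x 0 j) v)) /=.
rewrite (reindex (fun f : {ffun 'I_(2 ^ n) -> Z} => \row_j f j)) /=; last first.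
  exists (fun x : 'rV[Z]_(2 ^ n) => [ffun j => x 0 j]) => [f _|x _].
    by apply/ffunP => j; rewrite ffunE mxE.
  by apply/rowP => j; rewrite mxE ffunE.
under eq_bigr => f _ do under eq_bigr => j _ do rewrite mxE.
rewrite -(bigA_distr_bigA (fun j u => \sum_v P u v)) /=.
by rewrite big1 // => j _.
Qed.

Lemma mass n (I : 'I_(2 ^ n)) : \sum_q \sum_u @pUQ R L Y P n I u q = 1.
Proof.
have -> : \sum_q \sum_u @pUQ R L Y P n I u q =
    \sum_(r : {ffun 'I_I -> Z}) \sum_(y : {ffun 'I_(2 ^ n) -> Y}) \sum_u @pUQ R L Y P n I u (r, y).
  by rewrite [RHS]pair_bigA; apply: eq_bigr => -[r y].
rewrite -(omega_mass n) exchange_big /=.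
apply: eq_bigr => y _.
under eq_bigr => r _ do under eq_bigr => u _ do rewrite pUQE /=.
under eq_bigr => r _ do rewrite exchange_big /=.
rewrite exchange_big /=; apply: eq_bigr => x _.
under eq_bigr => r _ do under eq_bigr => u _ do rewrite boolR_and mulrA.
under eq_bigr => r _ do rewrite -mulr_suml.
rewrite -mulr_sumr sum_eq1.
under eq_bigr => r _ do rewrite pref_eq eq_sym.
rewrite -mulr_sumr (sum_eq1 [ffun k : 'I_I => Ug x k]).
by rewrite !mulr1.
Qed.
End Mass.


Lemma pUQ_ge0 (R : realFieldType) (L : nat) (Y : finType) (P : 'Z_L -> Y -> R) n i u q :
  (forall u y, 0 <= P u y) -> 0 <= @pUQ R L Y P n i u q.
Proof.
move=> P0; apply: sumr_ge0 => x _; apply: mulr_ge0; last by apply: ler0n.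
by apply: prodr_ge0 => j _.
Qed.

Theorem proposition3 (R : realFieldType) (L : nat) (Y : finType)
    (P : 'Z_L -> Y -> R) (b : nat -> bool) (n : nat) :
  (1 < L)%N ->
  (forall u y, 0 <= P u y) ->
  \sum_(u : 'Z_L) \sum_(y : Y) P u y = 1 ->
  (1 <= n)%N ->
  Kproc P n.+1 b <=
    (if b n.+1 then (1 + L%:R / 2) * Kproc P n b
     else 2 * (L%:R - 1) / L%:R * Kproc P n b ^+ 2).
Proof.
move=> hL P0 hP _.
set I : 'I_(2 ^ n) := Ordinal (idx_lt n b).
set A : 'I_(2 ^ n.+1) := Ordinal (idx_lt n.+1 b).
have hA : val A = (2 * I + b n.+1)%N by rewrite /= idxS mul2n.
rewrite /Kproc -/I -/A.
set c := (2 * (L%:R - 1) : R)^-1.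
have p0 := fun m i u q => @pUQ_ge0 R L Y P m i u q P0.
rewrite !KL_Dv //.
set S := \sum_q Dv (fun u => @pUQ R L Y P n I u q).
have S0 : 0 <= S by apply: sumr_ge0 => q _; apply: Dv_ge0.
have c0 : 0 <= c by rewrite /c invr_ge0 mulr_ge0 // subr_ge0 ler1n ltnW.
have Lm1 : L%:R - 1 != 0 :> R.
  by rewrite subr_eq0 pnatr_eq1 neq_ltn hL orbT.
rewrite -/c.
case: (b n.+1) hA => hA.
  pose G (p : 'Z_L * (({ffun 'I_I -> 'Z_L} * {ffun 'I_(2 ^ n) -> Y}) *
                      ({ffun 'I_I -> 'Z_L} * {ffun 'I_(2 ^ n) -> Y}))) :=
    Dv (fun w => @pUQ R L Y P n I (p.1 - w) p.2.1 * @pUQ R L Y P n I w p.2.2).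
  pose phi (q : {ffun 'I_A -> 'Z_L} * {ffun 'I_(2 ^ n.+1) -> Y}) :=
    (qn q.1 (2 * I), ((r1 I q.1, ylo q.2), (r2 I q.1, yhi q.2))).
  have hA1 : val A = (2 * I + 1)%N by rewrite hA.
  have E : forall q, Dv ((@pUQ R L Y P n.+1 A)^~ q) = G (phi q).
    move=> q; rewrite /Dv /G; apply: eq_bigr => u _; apply: eq_bigr => u' _.
    by rewrite !(decomp1 _ hA1).
  have inj : injective phi.
    move=> [g y] [g' y'] [Es E1 Ey1 E2 Ey2].
    by congr pair; [apply: (r_inj hA) | apply: y_inj].
  have key : \sum_q Dv ((@pUQ R L Y P n.+1 A)^~ q) <= 2 * S.
    under eq_bigr => q _ do rewrite E.
    apply: le_trans; first by apply: (inj_sum (phi := phi) (G := G) inj) => p; apply: Dv_ge0.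
    have -> : \sum_p G p = \sum_s \sum_q' \sum_q'' G (s, (q', q'')).
      under [RHS]eq_bigr => s _ do rewrite pair_bigA.
      by rewrite [RHS]pair_bigA; apply: eq_bigr => -[s [q1 q2]].
    rewrite exchange_big /=.
    under eq_bigr => q' _ do rewrite exchange_big /=.
    apply: (@le_trans _ _ (\sum_q' \sum_q''
      ((\sum_u @pUQ R L Y P n I u q') * Dv ((@pUQ R L Y P n I)^~ q'') +
       (\sum_u @pUQ R L Y P n I u q'') * Dv ((@pUQ R L Y P n I)^~ q')))).
      apply: ler_sum => q' _; apply: ler_sum => q'' _.
      exact: (plus_bound (a := fun v => @pUQ R L Y P n I v q') (b := fun v => @pUQ R L Y P n I v q'') (fun u => p0 _ _ _ _) (fun u => p0 _ _ _ _)).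
    rewrite le_eqVlt; apply/orP; left; apply/eqP.
    under eq_bigr => q' _ do rewrite big_split /= -mulr_sumr -mulr_suml.
    rewrite big_split /= -mulr_suml -/S.
    have M := mass hP I.
    rewrite [X in X * S]M mul1r.
    under eq_bigr => q _ do rewrite M mul1r.
    by change (S + S = 2 * S); ring.
  apply: le_trans (ler_wpM2l c0 key) _.
  have hL2 : (2 : R) <= L%:R by rewrite ler_nat.
  have cS0 : 0 <= c * S by apply: mulr_ge0.
  rewrite mulrCA (mulrC c).
  apply: ler_wpM2r; first by rewrite mulrC.
  lra.
have hA0 : val A = (2 * I)%N by rewrite hA addn0.
have Lp : (0 : R) < L%:R by rewrite ltr0n; case: (L) hL.
pose G (p : ({ffun 'I_I -> 'Z_L} * {ffun 'I_(2 ^ n) -> Y}) *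
            ({ffun 'I_I -> 'Z_L} * {ffun 'I_(2 ^ n) -> Y})) :=
  Dv ((@pUQ R L Y P n I)^~ p.1) * Dv ((@pUQ R L Y P n I)^~ p.2) / L%:R.
pose phi (q : {ffun 'I_A -> 'Z_L} * {ffun 'I_(2 ^ n.+1) -> Y}) :=
  ((r1 I q.1, ylo q.2), (r2 I q.1, yhi q.2)).
have E : forall q, Dv ((@pUQ R L Y P n.+1 A)^~ q) =
    Dv (conv ((@pUQ R L Y P n I)^~ (phi q).1) ((@pUQ R L Y P n I)^~ (phi q).2)).
  move=> q; rewrite /Dv /conv; apply: eq_bigr => u _; apply: eq_bigr => u' _.
  by rewrite !(decomp0 _ hA0).
have inj : injective phi.
  move=> [g y] [g' y'] [E1 Ey1 E2 Ey2].
  congr pair; last by apply: y_inj.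
  by apply: (r_inj (b := false) hA E1 E2).
have key : \sum_q Dv ((@pUQ R L Y P n.+1 A)^~ q) <= S * S / L%:R.
  under eq_bigr => q _ do rewrite E.
  apply: (@le_trans _ _ (\sum_q G (phi q))).
    apply: ler_sum => q _; rewrite /G ler_pdivlMr // mulrC.
    exact: conv_bound.
  apply: le_trans; first by apply: (inj_sum (phi := phi) (G := G) inj) => p;
    rewrite /G divr_ge0 ?ler0n // mulr_ge0 // Dv_ge0.
  rewrite le_eqVlt; apply/orP; left; apply/eqP.
  have -> : \sum_p G p = \sum_q' \sum_q'' G (q', q'').
    by rewrite pair_bigA; apply: eq_bigr => -[].
  rewrite /G /=.
  under eq_bigr => q' _ do rewrite -mulr_suml -mulr_sumr.
  by rewrite -mulr_suml -mulr_suml.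
apply: le_trans (ler_wpM2l c0 key) _.
rewrite le_eqVlt; apply/orP; left; apply/eqP.
rewrite /c; field.
by rewrite Lm1 lt0r_neq0.
Qed.
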